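(* Let $\mathcal{A}_1,\mathcal{A}_2$ be tautological algebras with maximal ideals $\mathfrak{m}_1,\mathfrak{m}_2$, and let $M_1,M_2\in\mathrm{Mat}_{2n}(\mathbb{C})$ be their structure matrices with respect to symplectic bases $\{X^1_1,\dots,X^1_{2n},t_1\}$ of $\mathfrak{m}_1$ and $\{X^2_1,\dots,X^2_{2n},t_2\}$ of $\mathfrak{m}_2$. Then $\mathcal{A}_1\cong\mathcal{A}_2$ (as unital algebras) if and only if there exists an invertible matrix $C\in\mathrm{GL}_{2n}(\mathbb{C})$ with $M_1=C\,M_2\,C^t$.
   Context: Work over $\mathbb{C}$, $n\ge1$. The Heisenberg group $\mathbb{H}_{2n+1}$ is $\mathbb{W}\times\mathbb{C}$ ($\mathbb{W}$ a $2n$-dimensional space with non-degenerate skew form $\omega$) with law $(w_1,t_1)(w_2,t_2)=(w_1+w_2,t_1+t_2+\tfrac12\omega(w_1,w_2))$; $T=(0,1)$, $\mathbb{I}=\mathbb{C}T$ its center. An $\mathbb{H}_{2n+1}$-structure on $\mathbb{P}V$, $V\cong\mathbb{C}^{2n+2}$, is an effective algebraic action with dense open orbit; the boundary is a hyperplane $\mathbb{P}V'$. Viewing $\mathbb{H}_{2n+1}\subset\mathbb{P}\mathrm{GL}_{2n+2}(\mathbb{C})$ and $\pi:\mathrm{GL}_{2n+2}\to\mathbb{P}\mathrm{GL}_{2n+2}$ the projection, the associated algebra $\mathcal{A}$ is the unital subalgebra of $\mathrm{Mat}_{2n+2}(\mathbb{C})$ generated by $\pi^{-1}(\mathbb{H}_{2n+1})$.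 For $o$ in the open orbit let $v=\overline{\mathbb{I}\cdot o}\setminus\mathbb{I}\cdot o$, $\hat v$ a representative, $\widetilde V=V/\mathbb{C}\hat v$; if $T$ fixes $\mathbb{P}V'$ pointwise, the action descends to a $\mathbb{G}_a^{2n}$-structure of $\mathbb{H}_{2n+1}/\mathbb{I}$ on $\mathbb{P}\widetilde V$, called tautological if in suitable coordinates it is $(a_i)\cdot[z_0,\dots,z_{2n}]=[z_0,z_1+a_1z_0,\dots,z_{2n}+a_{2n}z_0]$. A tautological algebra is the associated algebra of an $\mathbb{H}_{2n+1}$-structure for which $T$ fixes the boundary pointwise and the induced structure is tautological. For such $\mathcal{A}$ one has $\mathcal{A}=\mathbb{C}I_{2n+2}\oplus\mathfrak{m}$, where the maximal ideal $\mathfrak{m}$ is the (matrix realization of the) Lie algebra of $\mathbb{H}_{2n+1}$, a Heisenberg Lie algebra with center $\mathbb{C}t$ under the commutator bracket. A symplectic basis of $\mathfrak{m}$ is a basis $X_1,\dots,X_{2n},t$ with $X_iX_j-X_jX_i=\omega(X_i,X_j)t$, where $\omega(X_i,X_{n+j})=\delta_{ij}$ and $\omega(X_i,X_j)=\omega(X_{n+i},X_{n+j})=0$ for $1\le i,j\le n$. In such a basis each product $X_iX_j$ lies in $\mathbb{C}t$, say $X_iX_j=a_{ij}t$, and the structure matrix is $M_{\mathcal{A}}=(a_{ij})\in\mathrm{Mat}_{2n}(\mathbb{C})$. *)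

(* Defs.v *)
(* The ground field C is  R[i]  (complex numbers over a
   realType R, from mathcomp-real-closed); the generic definitions below are
   stated over an arbitrary field F and instantiated at F := R[i]. *)
From mathcomp Require Import all_boot all_algebra.
From mathcomp Require Import reals complex.
Set Implicit Arguments.
Unset Strict Implicit.
Unset Printing Implicit Defensive.
Import GRing.Theory Num.Theory.
Local Open Scope ring_scope.

Inductive polyfun (F : fieldType) (a b : nat) : ('M[F]_(a, b) -> F) -> Prop :=
  | pf_const (c : F) : polyfun (fun _ => c)
  | pf_coord (i : 'I_a) (j : 'I_b) : polyfun (fun x => x i j)
  | pf_add f g : polyfun f -> polyfun g -> polyfun (fun x => f x + g x)
  | pf_mul f g : polyfun f -> polyfun g -> polyfun (fun x => f x * g x).

Definition homog_polyfun (F : fieldType) (N : nat) (f : 'cV[F]_N -> F) : Prop :=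
  polyfun f /\ exists d : nat, forall (c : F) x, f (c *: x) = c ^+ d * f x.

(* Subsets of P(F^N) are represented by scale-invariant sets of nonzero
   column vectors (a point [x] of P(F^N) <-> the line F^* x). *)
Definition zclosed (F : fieldType) (N : nat) (Z : 'cV[F]_N -> Prop) : Prop :=
  exists S : ('cV[F]_N -> F) -> Prop,
    (forall f, S f -> homog_polyfun f) /\
    (forall x, x != 0 -> (Z x <-> forall f, S f -> f x = 0)).

Definition zopen (F : fieldType) (N : nat) (U : 'cV[F]_N -> Prop) : Prop :=
  zclosed (fun x => ~ U x).

Definition in_zclosure (F : fieldType) (N : nat) (S : 'cV[F]_N -> Prop)
    (x : 'cV[F]_N) : Prop :=
  x != 0 /\ forall Z, zclosed Z -> (forall y, y != 0 -> S y -> Z y) -> Z x.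

Definition zdense (F : fieldType) (N : nat) (S : 'cV[F]_N -> Prop) : Prop :=
  forall x, x != 0 -> in_zclosure S x.

Definition Jstd (F : fieldType) (n : nat) : 'M[F]_(n + n) :=
  block_mx 0 1%:M (- 1%:M) 0.

Definition omega (F : fieldType) (n : nat) (w1 w2 : 'rV[F]_(n + n)) : F :=
  (w1 *m Jstd F n *m w2^T) 0 0.

(* A (lifted) representation phi : H_{2n+1} -> GL(V), V = F^{2n+2},
   phi w t = image of (w,t). *)
Definition heis_rep (F : fieldType) (n : nat) :=
  'rV[F]_(n + n) -> F -> 'M[F]_((n + n).+2).

Definition orbit (F : fieldType) (n : nat) (phi : heis_rep F n)
    (x : 'cV[F]_((n + n).+2)) (y : 'cV[F]_((n + n).+2)) : Prop :=
  exists w t (c : F), c != 0 /\ y = c *: (phi w t *m x).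

Definition center_orbit (F : fieldType) (n : nat) (phi : heis_rep F n)
    (x : 'cV[F]_((n + n).+2)) (y : 'cV[F]_((n + n).+2)) : Prop :=
  exists s (c : F), c != 0 /\ y = c *: (phi 0 s *m x).

(* An H_{2n+1}-structure on P(V): an effective algebraic action with a dense
   open orbit.  The action is given through a lift phi to GL(V) which is a
   morphism of algebraic groups. *)
Definition H_structure (F : fieldType) (n : nat) (phi : heis_rep F n) : Prop :=
  (forall i j, polyfun (fun v : 'rV[F]_(n + n + 1) =>
                          phi (lsubmx v) (rsubmx v 0 0) i j)) /\
  phi 0 0 = 1 /\
  (forall w1 t1 w2 t2,
      phi (w1 + w2) (t1 + t2 + omega w1 w2 / 2) = phi w1 t1 *m phi w2 t2) /\
  (forall w t, (exists c : F, phi w t = c%:M) -> w = 0 /\ t = 0) /\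
  (exists o, o != 0 /\ zopen (orbit phi o) /\ zdense (orbit phi o)).

(* Standard tautological matrix on F^{2n+1} (column vectors):
   (a_i).[z_0,...,z_{2n}] = [z_0, z_1 + a_1 z_0, ..., z_{2n} + a_{2n} z_0]. *)
Definition taut_mx (F : fieldType) (n : nat) (a : 'rV[F]_(n + n)) :
    'M[F]_((n + n).+1) :=
  \matrix_(i, j) ((i == j)%:R +
     (if (j == ord0) then (if unlift ord0 i is Some k then a 0 k else 0)
      else 0)).

Definition tautological_structure (F : fieldType) (n : nat) (phi : heis_rep F n)
    : Prop :=
  H_structure phi /\
  exists o, o != 0 /\ zopen (orbit phi o) /\ zdense (orbit phi o) /\
  (forall x, x != 0 -> ~ orbit phi o x ->
             exists c : F, phi 0 1 *m x = c *: x) /\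
  exists vhat : 'cV[F]_((n + n).+2), vhat != 0 /\
    (forall y, y != 0 ->
       (in_zclosure (center_orbit phi o) y /\ ~ center_orbit phi o y) <->
       (exists c : F, c != 0 /\ y = c *: vhat)) /\
    (forall w t, exists c : F, phi w t *m vhat = c *: vhat) /\
    (* in suitable coordinates (a linear surjection P : V -> F^{2n+1} with
       kernel F vhat, and linear coordinates L on H/I = W) the induced action
       on P(V / F vhat) is the tautological one *)
    exists (P : 'M[F]_((n + n).+1, (n + n).+2)) (L : 'M[F]_(n + n)),
      \rank P = (n + n).+1 /\ P *m vhat = 0 /\ L \in unitmx /\
      forall w t, exists c : F, c != 0 /\
        P *m phi w t = c *: (taut_mx (w *m L) *m P).

(* The associated algebra: the unital subalgebra of Mat_{2n+2}(F) generated
   by pi^{-1}(image of H) = { c phi(g) | c <> 0 }. *)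
Inductive assoc_alg (F : fieldType) (n : nat) (phi : heis_rep F n) :
    'M[F]_((n + n).+2) -> Prop :=
  | aa_gen w t (c : F) : c != 0 -> assoc_alg phi (c *: phi w t)
  | aa_one : assoc_alg phi 1
  | aa_add A B : assoc_alg phi A -> assoc_alg phi B -> assoc_alg phi (A + B)
  | aa_scale (c : F) A : assoc_alg phi A -> assoc_alg phi (c *: A)
  | aa_mul A B : assoc_alg phi A -> assoc_alg phi B -> assoc_alg phi (A *m B).

Definition tautological_algebra (F : fieldType) (n : nat)
    (A : 'M[F]_((n + n).+2) -> Prop) : Prop :=
  exists phi : heis_rep F n, tautological_structure phi /\
    forall M, A M <-> assoc_alg phi M.

Definition is_ideal (F : fieldType) (N : nat) (A I : 'M[F]_N -> Prop) : Prop :=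
  (forall x, I x -> A x) /\ I 0 /\
  (forall x y, I x -> I y -> I (x + y)) /\
  (forall (c : F) x, I x -> I (c *: x)) /\
  (forall a x, A a -> I x -> I (a *m x) /\ I (x *m a)).

Definition is_proper_ideal (F : fieldType) (N : nat) (A I : 'M[F]_N -> Prop) :=
  is_ideal A I /\ exists a, A a /\ ~ I a.

Definition is_maximal_ideal (F : fieldType) (N : nat) (A I : 'M[F]_N -> Prop) :=
  is_proper_ideal A I /\
  forall J, is_proper_ideal A J -> (forall x, I x -> J x) ->
            forall x, J x -> I x.

Definition symplectic_basis (F : fieldType) (n : nat)
    (m : 'M[F]_((n + n).+2) -> Prop)
    (X : 'I_(n + n) -> 'M[F]_((n + n).+2)) (t : 'M[F]_((n + n).+2)) : Prop :=
  (forall i, m (X i)) /\ m t /\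
  (forall (c : 'I_(n + n) -> F) (d : F),
      \sum_i c i *: X i + d *: t = 0 -> (forall i, c i = 0) /\ d = 0) /\
  (forall Y, m Y -> exists (c : 'I_(n + n) -> F) (d : F),
      Y = \sum_i c i *: X i + d *: t) /\
  (forall i j, X i *m X j - X j *m X i = Jstd F n i j *: t).

Definition alg_isomorphic (F : fieldType) (N : nat) (A1 A2 : 'M[F]_N -> Prop)
    : Prop :=
  exists f : 'M[F]_N -> 'M[F]_N,
    (forall x, A1 x -> A2 (f x)) /\
    (forall x y, A1 x -> A1 y -> f x = f y -> x = y) /\
    (forall z, A2 z -> exists x, A1 x /\ f x = z) /\
    (forall x y, A1 x -> A1 y -> f (x + y) = f x + f y) /\
    (forall (c : F) x, A1 x -> f (c *: x) = c *: f x) /\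
    (forall x y, A1 x -> A1 y -> f (x *m y) = f x *m f y) /\
    f 1 = 1.

(* Main.v *)
Require Import Defs.
From mathcomp Require Import all_boot all_algebra.
From mathcomp Require Import reals complex.
From mathcomp Require Import ring.
From Stdlib Require Import ClassicalEpsilon.
Import GRing.Theory Num.Theory.
Local Open Scope ring_scope.
Set Implicit Arguments.
Unset Strict Implicit.

Definition el (F : fieldType) (n : nat) (X : 'I_(n + n) -> 'M[F]_((n + n).+2))
  (t : 'M[F]_((n + n).+2)) (g : F) (c : 'rV[F]_(n + n)) (d : F) : 'M[F]_((n + n).+2) :=
  g%:M + \sum_i c 0 i *: X i + d *: t.

Lemma el_add (F : fieldType) n X t g c d g' c' d' :
  @el F n X t g c d + el X t g' c' d' = el X t (g + g') (c + c') (d + d').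
Proof.
rewrite /el raddfD /= scalerDl.
have -> : \sum_i (c + c') 0 i *: X i = \sum_i c 0 i *: X i + \sum_i c' 0 i *: X i.
  by rewrite -big_split; apply: eq_bigr => i _; rewrite mxE scalerDl.
by rewrite addrACA [X in X + _ = _]addrACA.
Qed.

Lemma el_scale (F : fieldType) n X t a g c d :
  a *: @el F n X t g c d = el X t (a * g) (a *: c) (a * d).
Proof.
rewrite /el !scalerDr -scalemx1 scalerA scalemx1 scaler_sumr scalerA; congr (_ + _ + _).
by apply: eq_bigr => i _; rewrite mxE scalerA.
Qed.

Lemma el000 (F : fieldType) n X t : @el F n X t 0 0 0 = 0.
Proof.
rewrite /el big1 ?scale0r ?addr0 //; last by move=> i _; rewrite mxE scale0r.
by apply/matrixP => i j; rewrite !mxE mul0rn.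
Qed.

Lemma el_sum (F : fieldType) n X t (I : finType) (g : I -> F) c d :
  \sum_i @el F n X t (g i) (c i) (d i) = el X t (\sum_i g i) (\sum_i c i) (\sum_i d i).
Proof.
elim: (index_enum I) => [|x r IH]; first by rewrite !big_nil el000.
by rewrite !big_cons IH el_add.
Qed.

Record hyp (F : fieldType) (n : nat) (A m : 'M[F]_((n + n).+2) -> Prop)
  (X : 'I_(n + n) -> 'M[F]_((n + n).+2)) (t : 'M[F]_((n + n).+2))
  (M : 'M[F]_(n + n)) : Prop := Hyp {
  hpos : (0 < n)%N;
  hA1 : A 1;
  hAadd : forall x y, A x -> A y -> A (x + y);
  hAscale : forall (c : F) x, A x -> A (c *: x);
  hAmul : forall x y, A x -> A y -> A (x *m y);
  hmax : is_maximal_ideal A m;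
  hsb : symplectic_basis m X t;
  hprod : forall i j, X i *m X j = M i j *: t }.

Lemma el0 (F : fieldType) n X t c d :
  @el F n X t 0 c d = \sum_i c 0 i *: X i + d *: t.
Proof. by rewrite /el raddf0 add0r. Qed.


Lemma mA F n A m X t M (H : @hyp F n A m X t M) x : m x -> A x.
Proof. by case: (hmax H) => [[[h _] _] _]; apply: h. Qed.
Lemma m0 F n A m X t M (H : @hyp F n A m X t M) : m 0.
Proof. by case: (hmax H) => [[[_ [h _]] _] _]. Qed.
Lemma madd F n A m X t M (H : @hyp F n A m X t M) x y : m x -> m y -> m (x + y).
Proof. by case: (hmax H) => [[[_ [_ [h _]]] _] _]; apply: h. Qed.
Lemma mscale F n A m X t M (H : @hyp F n A m X t M) c x : m x -> m (c *: x).
Proof. by case: (hmax H) => [[[_ [_ [_ [h _]]]] _] _]; apply: h. Qed.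
Lemma mmul F n A m X t M (H : @hyp F n A m X t M) a x : A a -> m x ->
  m (a *m x) /\ m (x *m a).
Proof. by case: (hmax H) => [[[_ [_ [_ [_ h]]]] _] _]; apply: h. Qed.
Lemma mproper F n A m X t M (H : @hyp F n A m X t M) : exists a, A a /\ ~ m a.
Proof. by case: (hmax H) => [[_ h] _]. Qed.
Lemma mmaxi F n A m X t M (H : @hyp F n A m X t M) J :
  is_proper_ideal A J -> (forall x, m x -> J x) -> forall x, J x -> m x.
Proof. by case: (hmax H) => [_ h]; apply: h. Qed.
Lemma mX F n A m X t M (H : @hyp F n A m X t M) i : m (X i).
Proof. by case: (hsb H) => [h _]. Qed.
Lemma mt F n A m X t M (H : @hyp F n A m X t M) : m t.
Proof. by case: (hsb H) => [_ [h _]]. Qed.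
Lemma mindep F n A m X t M (H : @hyp F n A m X t M) c d :
  \sum_i c i *: X i + d *: t = 0 -> (forall i, c i = 0) /\ d = 0.
Proof. by case: (hsb H) => [_ [_ [h _]]]; apply: h. Qed.
Lemma mspan F n A m X t M (H : @hyp F n A m X t M) y : m y ->
  exists c d, y = \sum_i c i *: X i + d *: t.
Proof. by case: (hsb H) => [_ [_ [_ [h _]]]]; apply: h. Qed.
Lemma mcomm F n A m X t M (H : @hyp F n A m X t M) i j :
  X i *m X j - X j *m X i = Jstd F n i j *: t.
Proof. by case: (hsb H) => [_ [_ [_ [_ h]]]]. Qed.

Lemma m_el F n A m X t M (H : @hyp F n A m X t M) y : m y ->
  exists c d, y = el X t 0 c d.
Proof.
move=> /(mspan H) [c [d ->]]; exists (\row_i c i), d; rewrite el0.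
by congr (_ + _); apply: eq_bigr => i _; rewrite mxE.
Qed.

Lemma el_m F n A m X t M (H : @hyp F n A m X t M) c d : m (el X t 0 c d).
Proof.
rewrite el0; apply: (madd H); last exact/(mscale H)/(mt H).
apply: (big_rec (fun x => m x)); first exact: (m0 H).
by move=> i x _ hx; apply: (madd H) => //; apply/(mscale H)/(mX H).
Qed.

Lemma t_neq0 F n A m X t M (H : @hyp F n A m X t M) : t != 0.
Proof.
apply/eqP => t0; have := (mindep H (c := fun _ => 0) (d := 1)).
rewrite t0 scaler0 addr0 big1 => [/(_ erefl) [_ /eqP]|i _]; last by rewrite scale0r.
by rewrite oner_eq0.
Qed.

Lemma key_scalar (F : fieldType) (p s u x y z w : F) :
  p * x = p * z -> p * y = (s + 1) * z -> (s + 1) * x = s * z -> (s + 1) * y = u * z ->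
  s * x = p * w -> s * y = (s + 1) * w -> u * x = s * w -> u * y = u * w ->
  [/\ x = 0, y = 0, z = 0 & w = 0].
Proof.
move=> e1 e2 e3 e4 e5 e6 e7 e8.
have [s0|s0] := eqVneq s 0.
  move: e1 e2 e3 e4 e5 e6 e7 e8; rewrite s0 !add0r !mul1r !mul0r.
  move=> e1 e2 -> e4 e5 e6 e7 e8.
  have w0 : w = 0 by rewrite e6.
  have yz : y = u * z by [].
  have uy : u * y = 0 by rewrite e8 w0 mulr0.
  have y0 : y = 0 by rewrite yz -e2 mulrCA uy mulr0.
  by split => //; rewrite -e2 y0 mulr0.
have [q0|q0] := eqVneq (s + 1) 0.
  have sm : s = -1 by apply/eqP; rewrite -addr_eq0 q0.
  move: e1 e2 e3 e4 e5 e6 e7 e8; rewrite q0 !mul0r sm !mulN1r.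
  move=> e1 e2 e3 e4 e5 e6 e7 e8.
  have z0 : z = 0 by apply/eqP; rewrite -oppr_eq0 -e3.
  have y0 : y = 0 by apply/eqP; rewrite -oppr_eq0 e6.
  have px : p * x = 0 by rewrite e1 z0 mulr0.
  have x0 : x = 0.
    have wE : w = - (u * x) by rewrite e7 opprK.
    by rewrite -[x]opprK e5 wE mulrN opprK mulrCA px mulr0.
  by split => //; rewrite -[w]opprK -e7 x0 mulr0 oppr0.
have z0 : z = 0.
  have h1 : s * (s * z) = s * (p * y).
    by rewrite -e3 mulrCA e5 mulrCA -e6 mulrCA.
  have h2 : s * z = p * y by apply: (mulfI s0).
  have : (s + 1) * z - s * z = 0 by rewrite h2 e2 subrr.
  by rewrite mulrDl mul1r addrAC subrr add0r.
have x0 : x = 0 by apply: (mulfI q0); rewrite e3 z0 !mulr0.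
have y0 : y = 0 by apply: (mulfI q0); rewrite e4 z0 !mulr0.
by split => //; apply: (mulfI q0); rewrite -e6 y0 !mulr0.
Qed.

Definition ia n (hn : (0 < n)%N) : 'I_(n + n) := lshift n (Ordinal hn).
Definition ib n (hn : (0 < n)%N) : 'I_(n + n) := rshift n (Ordinal hn).

Lemma Jab F n hn : Jstd F n (ia hn) (ib hn) = 1.
Proof. by rewrite /Jstd /ia /ib block_mxEur mxE eqxx. Qed.

Lemma tcomm F n A m X t M (H : @hyp F n A m X t M) :
  t = X (ia (hpos H)) *m X (ib (hpos H)) - X (ib (hpos H)) *m X (ia (hpos H)).
Proof. by rewrite (mcomm H) Jab scale1r. Qed.

Lemma qs F n A m X t M (H : @hyp F n A m X t M) :
  M (ia (hpos H)) (ib (hpos H)) = M (ib (hpos H)) (ia (hpos H)) + 1.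
Proof.
have e := tcomm H; rewrite !(hprod H) -scalerBl in e.
have : (M (ia (hpos H)) (ib (hpos H)) - M (ib (hpos H)) (ia (hpos H)) - 1) *: t = 0.
  by rewrite scalerBl -e scale1r subrr.
move/eqP; rewrite scaler_eq0 (negbTE (t_neq0 H)) orbF subr_eq0 => /eqP <-.
by rewrite addrC subrK.
Qed.

Lemma assocE F n A m X t M (H : @hyp F n A m X t M) i j k :
  M i j *: (t *m X k) = M j k *: (X i *m t).
Proof. by rewrite scalemxAl scalemxAr -!(hprod H) mulmxA. Qed.

Lemma entry (F : fieldType) N (c d : F) (P Q : 'M[F]_N) r s :
  c *: P = d *: Q -> c * P r s = d * Q r s.
Proof. by move/(congr1 (fun T : 'M[F]_N => T r s)); rewrite !mxE. Qed.

Lemma tX0 F n A m X t M (H : @hyp F n A m X t M) :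
  (forall k, t *m X k = 0) /\ (forall k, X k *m t = 0) /\ t *m t = 0.
Proof.
set a := ia (hpos H); set b := ib (hpos H).
have E := assocE H.
have q := qs H; rewrite -/a -/b in q.
have [x0 [y0 [z0 w0]]] : [/\ t *m X a = 0, t *m X b = 0, X a *m t = 0 & X b *m t = 0].
  have hh : forall r s, [/\ (t *m X a) r s = 0, (t *m X b) r s = 0,
                           (X a *m t) r s = 0 & (X b *m t) r s = 0].
    move=> r s; apply: (@key_scalar F (M a a) (M b a) (M b b)); rewrite -?q;
      apply: entry; apply: E.
  split; apply/matrixP => r s; rewrite [RHS]mxE; by have [] := hh r s.
have tE := tcomm H; rewrite -/a -/b in tE.
split; first by move=> k; rewrite tE mulmxBl -!mulmxA !(hprod H) -!scalemxAr z0 w0 !scaler0 subrr.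
split; first by move=> k; rewrite tE mulmxBr !mulmxA !(hprod H) -!scalemxAl x0 y0 !scaler0 subrr.
by rewrite {2}tE mulmxBr !mulmxA x0 y0 !mul0mx subrr.
Qed.

Lemma el_split (F : fieldType) n X t g c d :
  @el F n X t g c d = g%:M + el X t 0 c d.
Proof. by rewrite /el raddf0 add0r !addrA. Qed.

Lemma el_g00 (F : fieldType) n X t g : @el F n X t g 0 0 = g%:M.
Proof. by rewrite /el big1 ?scale0r ?addr0 // => i _; rewrite mxE scale0r. Qed.

Lemma sumXX F n A m X t M (H : @hyp F n A m X t M) (c c' : 'rV[F]_(n + n)) :
  (\sum_i c 0 i *: X i) *m (\sum_i c' 0 i *: X i) = ((c *m M *m c'^T) 0 0) *: t.
Proof.
rewrite mulmx_suml.
under eq_bigr => i _ do rewrite mulmx_sumr.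
rewrite mxE scaler_suml exchange_big /=; apply: eq_bigr => j _.
rewrite mxE mulr_suml scaler_suml; apply: eq_bigr => i _.
by rewrite -scalemxAl -scalemxAr (hprod H) !scalerA mxE mulrAC mulrC mulrA.
Qed.

Lemma sumX_t F n A m X t M (H : @hyp F n A m X t M) (c : 'rV[F]_(n + n)) :
  (\sum_i c 0 i *: X i) *m t = 0 /\ t *m (\sum_i c 0 i *: X i) = 0.
Proof.
have [h1 [h2 h3]] := tX0 H; split.
  by rewrite mulmx_suml big1 // => i _; rewrite -scalemxAl h2 scaler0.
by rewrite mulmx_sumr big1 // => i _; rewrite -scalemxAr h1 scaler0.
Qed.

Lemma elmul00 F n A m X t M (H : @hyp F n A m X t M) c d c' d' :
  el X t 0 c d *m el X t 0 c' d' = el X t 0 0 ((c *m M *m c'^T) 0 0).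
Proof.
have [_ [_ h3]] := tX0 H.
have [s1 s2] := sumX_t H c; have [s3 s4] := sumX_t H c'.
rewrite !el0 [in RHS]big1 ?add0r; last by move=> i _; rewrite mxE scale0r.
rewrite mulmxDl !mulmxDr (sumXX H) -!scalemxAr -!scalemxAl s1 s4 h3.
by rewrite !scaler0 !addr0.
Qed.

Lemma mulmxDD (F : fieldType) N (a b c d : 'M[F]_N) :
  (a + b) *m (c + d) = a *m c + a *m d + b *m c + b *m d.
Proof. by rewrite mulmxDl !mulmxDr !addrA. Qed.

Lemma elmul F n A m X t M (H : @hyp F n A m X t M) g c d g' c' d' :
  el X t g c d *m el X t g' c' d' =
  el X t (g * g') (g *: c' + g' *: c) (g * d' + g' * d + (c *m M *m c'^T) 0 0).
Proof.
rewrite [el X t g c d]el_split [el X t g' c' d']el_split.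
rewrite mulmxDD !mul_scalar_mx mul_mx_scalar (elmul00 H).
rewrite -(el_g00 X t) !el_scale !el_add.
by congr el; rewrite ?scaler0 ?mulr0 ?addr0 ?add0r.
Qed.

Lemma el_t (F : fieldType) n X t k : @el F n X t 0 0 k = k *: t.
Proof. by rewrite el0 big1 ?add0r // => i _; rewrite mxE scale0r. Qed.

Lemma X_el (F : fieldType) n X t j : X j = @el F n X t 0 (delta_mx 0 j) 0.
Proof.
rewrite el0 scale0r addr0 (bigD1 j) //= mxE !eqxx scale1r big1 ?addr0 // => i /negbTE hij.
by rewrite mxE hij andbF scale0r.
Qed.

Lemma one_notin_m F n A m X t M (H : @hyp F n A m X t M) : ~ m 1.
Proof.
move=> m1; have [a [Aa nma]] := mproper H; apply: nma.
by have [_ ] := mmul H Aa m1; rewrite mul1mx.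
Qed.

Lemma el_eq0 F n A m X t M (H : @hyp F n A m X t M) g c d :
  el X t g c d = 0 -> [/\ g = 0, c = 0 & d = 0].
Proof.
move=> e.
have g0 : g = 0.
  apply/eqP/negP => /negP gn0; apply: (one_notin_m H).
  have : (1 : 'M[F]_((n + n).+2)) = (- g^-1) *: el X t 0 c d.
    move: e; rewrite el_split addrC => /eqP; rewrite addr_eq0 => /eqP ->.
    by rewrite scaleNr scalerN opprK -(scalemx1 _ g) scalerA mulVf // scale1r.
  by move=> ->; apply: (mscale H); apply: (el_m H).
move: e; rewrite g0 el0 => e.
have [hc hd] := mindep H (c := fun i => c 0 i) e.
split => //; apply/matrixP => i j; rewrite [RHS]mxE ord1; exact: hc.
Qed.

Lemma el_inj F n A m X t M (H : @hyp F n A m X t M) g c d g' c' d' :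
  el X t g c d = el X t g' c' d' -> [/\ g = g', c = c' & d = d'].
Proof.
move=> e; have : el X t g c d + (-1) *: el X t g' c' d' = 0 by rewrite e scaleN1r subrr.
rewrite el_scale el_add !mulN1r scaleN1r => /(el_eq0 H) [/subr0_eq ? /subr0_eq ? /subr0_eq ?].
by [].
Qed.

Lemma el_A F n A m X t M (H : @hyp F n A m X t M) g c d : A (el X t g c d).
Proof.
rewrite el_split -scalemx1; apply: (hAadd H); first exact/(hAscale H)/(hA1 H).
exact/(mA H)/(el_m H).
Qed.

Lemma mX_t F n A m X t M (H : @hyp F n A m X t M) y j : m y ->
  exists b, y *m X j = b *: t.
Proof.
move=> /(m_el H) [c [d ->]]; rewrite (X_el X t j) (elmul00 H) el_t; eexists; reflexivity.
Qed.

Lemma a_t F n A m X t M (H : @hyp F n A m X t M) a : A a ->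
  exists al, a *m t = al *: t.
Proof.
move=> Aa; rewrite (tcomm H) mulmxBr !mulmxA.
have [b1 ->] := mX_t H (ib (hpos H)) (proj1 (mmul H Aa (mX H (ia (hpos H))))).
have [b2 ->] := mX_t H (ia (hpos H)) (proj1 (mmul H Aa (mX H (ib (hpos H))))).
by exists (b1 - b2); rewrite -(tcomm H) scalerBl.
Qed.

Lemma m_t F n A m X t M (H : @hyp F n A m X t M) y : m y -> y *m t = 0.
Proof.
move=> /(m_el H) [c [d ->]].
rewrite [Y in _ *m Y](_ : t = el X t 0 0 1); last by rewrite el_t scale1r.
by rewrite (elmul00 H) trmx0 mulmx0 mxE el_t scale0r.
Qed.

Lemma decomp F n A m X t M (H : @hyp F n A m X t M) a : A a ->
  exists g c d, a = el X t g c d.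
Proof.
move=> Aa; have [al hal] := a_t H Aa.
pose K := fun x => A x /\ x *m t = 0.
have A0 : A 0 by rewrite -(scale0r 1); apply/(hAscale H)/(hA1 H).
have Kid : is_proper_ideal A K.
  split; last first.
    exists 1; split; first exact: (hA1 H).
    by case=> _; rewrite mul1mx; apply/eqP/(t_neq0 H).
  split; first by move=> x [].
  split; first by split; rewrite ?mul0mx.
  split; first by move=> x y [Ax hx] [Ay hy]; split; [apply: (hAadd H)| rewrite mulmxDl hx hy addr0].
  split; first by move=> c x [Ax hx]; split; [apply: (hAscale H)| rewrite -scalemxAl hx scaler0].
  move=> b x Ab [Ax hx]; split; split; try by apply: (hAmul H).
    by rewrite -mulmxA hx mulmx0.
  by rewrite -mulmxA; have [bl ->] := a_t H Ab; rewrite -scalemxAr hx scaler0.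
have mK : forall x, m x -> K x by move=> x mx; split; [apply: (mA H)| apply: (m_t H)].
have : m (a - al%:M).
  apply: (mmaxi H Kid mK); split.
    by rewrite -scaleN1r -scalemx1; apply: (hAadd H) => //; apply/(hAscale H)/(hAscale H)/(hA1 H).
  by rewrite mulmxBl hal mul_scalar_mx subrr.
move=> /(m_el H) [c [d e]]; exists al, c, d.
by rewrite el_split -e addrC subrK.
Qed.


Lemma trmxZ' (F : fieldType) p q (a : F) (B : 'M[F]_(p, q)) : (a *: B)^T = a *: B^T.
Proof. by apply/matrixP => i j; rewrite !mxE. Qed.

Lemma cong_iso F n A1 m1 X1 t1 M1 A2 m2 X2 t2 M2
  (H1 : @hyp F n A1 m1 X1 t1 M1) (H2 : @hyp F n A2 m2 X2 t2 M2) C :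
  C \in unitmx -> M1 = C *m M2 *m C^T -> alg_isomorphic A1 A2.
Proof.
move=> Cu eM.
pose P a := fun p : F * 'rV[F]_(n + n) * F => a = el X1 t1 p.1.1 p.1.2 p.2.
pose co a := epsilon (inhabits (0 : F, 0 : 'rV[F]_(n + n), 0 : F)) (P a).
have coE : forall g c d, co (el X1 t1 g c d) = (g, c, d).
  move=> g c d; have := epsilon_spec (inhabits (0 : F, 0 : 'rV[F]_(n + n), 0 : F))
     (P (el X1 t1 g c d)) (ex_intro _ (g, c, d) erefl).
  rewrite -/(co _); case: (co _) => [[g' c'] d'] /= /(el_inj H1) [-> -> ->] //.
pose f a := el X2 t2 (co a).1.1 ((co a).1.2 *m C) (co a).2.
have fE : forall g c d, f (el X1 t1 g c d) = el X2 t2 g (c *m C) d.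
  by move=> g c d; rewrite /f coE.
exists f; split.
  by move=> x /(decomp H1) [g [c [d ->]]]; rewrite fE; apply: (el_A H2).
split.
  move=> x y /(decomp H1) [g [c [d ->]]] /(decomp H1) [g' [c' [d' ->]]].
  rewrite !fE => /(el_inj H2) [-> e ->]; congr el.
  by rewrite -(mulmxK Cu c) e mulmxK.
split.
  move=> z /(decomp H2) [g [c [d ->]]]; exists (el X1 t1 g (c *m invmx C) d).
  by split; [apply: (el_A H1) | rewrite fE mulmxKV].
split.
  move=> x y /(decomp H1) [g [c [d ->]]] /(decomp H1) [g' [c' [d' ->]]].
  by rewrite el_add !fE el_add mulmxDl.
split.
  move=> a x /(decomp H1) [g [c [d ->]]].
  by rewrite el_scale !fE el_scale scalemxAl.
split.
  move=> x y /(decomp H1) [g [c [d ->]]] /(decomp H1) [g' [c' [d' ->]]].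
  rewrite (elmul H1) !fE (elmul H2); congr el.
    by rewrite mulmxDl -!scalemxAl.
  by rewrite eM !trmx_mul !mulmxA.
have e1 : (1 : 'M[F]_((n + n).+2)) = el X1 t1 1 0 0 by rewrite el_g00.
by rewrite {1}e1 fE mul0mx el_g00.
Qed.

Lemma rowC_entry (F : fieldType) K (B C : 'M[F]_K) i j :
  (C *m B *m C^T) i j = (row i C *m B *m (row j C)^T) 0 0.
Proof.
rewrite !mxE; apply: eq_bigr => k _; rewrite !mxE; congr (_ * _).
by apply: eq_bigr => l _; rewrite !mxE.
Qed.

Lemma iso_cong F n A1 m1 X1 t1 M1 A2 m2 X2 t2 M2
  (H1 : @hyp F n A1 m1 X1 t1 M1) (H2 : @hyp F n A2 m2 X2 t2 M2) :
  (forall x : F, exists y, y * y = x) ->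
  alg_isomorphic A1 A2 -> exists C, C \in unitmx /\ M1 = C *m M2 *m C^T.
Proof.
move=> sq [f [fA [finj [fsurj [fadd [fscale [fmul f1]]]]]]].
have A0 : A1 0 by rewrite -(scale0r 1); apply/(hAscale H1)/(hA1 H1).
have f0 : f 0 = 0 by have := fscale 0 0 A0; rewrite !scale0r.
have fsum : forall G : 'I_(n + n) -> 'M[F]_((n + n).+2), (forall i, A1 (G i)) ->
    A1 (\sum_i G i) /\ f (\sum_i G i) = \sum_i f (G i).
  move=> G hG; apply: (big_rec2 (fun y1 y2 => A1 y1 /\ f y1 = y2)) => // i y1 y2 _ [h1 h2].
  by split; [apply: (hAadd H1) | rewrite fadd // h2].
have fel : forall g c d, f (el X1 t1 g c d) =
    g *: 1 + \sum_i c 0 i *: f (X1 i) + d *: f t1.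
  move=> g c d.
  have hS : forall i, A1 (c 0 i *: X1 i) by move=> i; apply/(hAscale H1)/(mA H1)/(mX H1).
  have [AS fS] := fsum _ hS.
  have At : A1 (d *: t1) by apply/(hAscale H1)/(mA H1)/(mt H1).
  have Ag : A1 (g *: 1) by apply/(hAscale H1)/(hA1 H1).
  rewrite /el -scalemx1 fadd ?fadd //; last by apply: (hAadd H1).
  rewrite fscale; last exact: (hA1 H1).
  rewrite (f1 : f 1%:M = 1%:M) fS fscale //; last exact/(mA H1)/(mt H1).
  congr (_ + _ + _); apply: eq_bigr => i _; rewrite fscale //; exact/(mA H1)/(mX H1).
have fnil : forall y, m1 y -> exists c d, f y = el X2 t2 0 c d.
  move=> y my; have Ay := mA H1 my.
  have y3 : y *m y *m y = 0.
    have [c [d ->]] := m_el H1 my.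
    by rewrite (elmul00 H1) (elmul00 H1) !mul0mx mxE el000.
  have Ayy : A1 (y *m y) by apply: (hAmul H1).
  have := fA _ Ay => /(decomp H2) [g [c [d e]]].
  have : f (y *m y *m y) = 0 by rewrite y3.
  rewrite !fmul // e !(elmul H2) -(el000 X2 t2) => /(el_inj H2) [g3 _ _].
  have g0 : g = 0 by move/eqP: g3; rewrite !mulf_eq0 !orbb => /eqP.
  by exists c, d; rewrite g0.
have [u hu] : exists u : 'I_(n + n) -> 'rV[F]_(n + n) * F,
    forall i, f (X1 i) = el X2 t2 0 (u i).1 (u i).2.
  apply: (@fin_all_exists _ (fun _ => ('rV[F]_(n + n) * F)%type) (fun i p => f (X1 i) = el X2 t2 0 p.1 p.2)) => i.
  have [c [d e]] := fnil _ (mX H1 i).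
  by exists (c, d).
pose C := \matrix_(i, k) (u i).1 0 k.
have rowC : forall i, row i C = (u i).1 by move=> i; apply/rowP => k; rewrite !mxE.
set a := ia (hpos H1); set b := ib (hpos H1).
have fsub : forall x y, A1 x -> A1 y -> f (x - y) = f x - f y.
  move=> x y Ax Ay; rewrite -!scaleN1r fadd ?fscale //; exact: (hAscale H1).
have AX : forall i, A1 (X1 i) by move=> i; exact/(mA H1)/(mX H1).
pose lam := ((u a).1 *m M2 *m (u b).1^T) 0 0 - ((u b).1 *m M2 *m (u a).1^T) 0 0.
have ft : f t1 = lam *: t2.
  rewrite {1}(tcomm H1) -/a -/b fsub; try by apply: (hAmul H1).
  by rewrite !fmul // !hu !(elmul00 H2) !el_t scalerBl.
have lam0 : lam != 0.
  apply/eqP => l0; move: ft; rewrite l0 scale0r -f0 => /finj.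
  have := t_neq0 H1 => /eqP; move=> h /(_ (mA H1 (mt H1)) A0); exact: h.
have fel2 : forall g c d, f (el X1 t1 g c d) =
    el X2 t2 g (c *m C) (\sum_i c 0 i * (u i).2 + d * lam).
  move=> g c d; rewrite fel ft scalerA -(el_t X2) scalemx1 -(el_g00 X2 t2).
  under eq_bigr => i _ do rewrite hu el_scale.
  rewrite el_sum !el_add; congr el.
  - by rewrite big1 ?addr0 // => i _; rewrite mulr0.
  - by rewrite add0r addr0 mulmx_sum_row; apply: eq_bigr => i _; rewrite rowC.
  - by rewrite add0r.
have eM : lam *: M1 = C *m M2 *m C^T.
  apply/matrixP => i j; rewrite rowC_entry !rowC mxE.
  have : f (X1 i *m X1 j) = f (X1 i) *m f (X1 j) by rewrite fmul.
  rewrite (hprod H1) fscale; last exact/(mA H1)/(mt H1).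
  rewrite ft !hu (elmul00 H2) scalerA -(el_t X2) => /(el_inj H2) [_ _ <-].
  by rewrite mulrC.
have Cu : C \in unitmx.
  rewrite unitmxE unitfE; apply/negP => /det0P [v vn0 vC].
  move/negP: vn0; apply; apply/eqP.
  pose mu := \sum_i v 0 i * (u i).2.
  have : f (el X1 t1 0 v 0) = f (el X1 t1 0 0 (mu / lam)).
    rewrite !fel2 vC mul0mx mul0r addr0 [in RHS]big1 ?add0r ?divfK // => i _; by rewrite mxE mul0r.
  move=> e; have := finj _ _ (el_A H1 0 v 0) (el_A H1 0 0 (mu / lam)) e.
  by move=> /(el_inj H1) [_ ? _].
have [s hs] := sq lam.
have s0 : s != 0 by apply: contraNneq lam0 => s0; rewrite -hs s0 mulr0.
exists (s^-1 *: C); split; first by rewrite unitmxZ // unitfE invr_eq0.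
rewrite trmxZ' -!scalemxAl -scalemxAr scalerA -eM scalerA -hs mulrACA mulVf //.
by rewrite mulr1 scale1r.
Qed.

Lemma taut_hyp (F : fieldType) n (hn : (0 < n)%N) (A m : 'M[F]_((n + n).+2) -> Prop) X t (M : 'M[F]_(n + n)) :
  tautological_algebra A -> is_maximal_ideal A m -> symplectic_basis m X t ->
  (forall i j, X i *m X j = M i j *: t) -> hyp A m X t M.
Proof.
move=> [phi [_ hA]] hm hs hp; split => //.
- by apply/hA; apply: aa_one.
- by move=> x y /hA ax /hA ay; apply/hA; apply: aa_add.
- by move=> c x /hA ax; apply/hA; apply: aa_scale.
- by move=> x y /hA ax /hA ay; apply/hA; apply: aa_mul.
Qed.

Unset Implicit Arguments.
Set Strict Implicit.

Theorem lemma3p8 (R : realType) (n : nat) (hn : (0 < n)%N)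
    (A1 A2 m1 m2 : 'M[R[i]]_((n + n).+2) -> Prop)
    (X1 X2 : 'I_(n + n) -> 'M[R[i]]_((n + n).+2))
    (t1 t2 : 'M[R[i]]_((n + n).+2))
    (M1 M2 : 'M[R[i]]_(n + n)) :
  tautological_algebra A1 -> tautological_algebra A2 ->
  is_maximal_ideal A1 m1 -> is_maximal_ideal A2 m2 ->
  symplectic_basis m1 X1 t1 -> symplectic_basis m2 X2 t2 ->
  (forall i j, X1 i *m X1 j = M1 i j *: t1) ->
  (forall i j, X2 i *m X2 j = M2 i j *: t2) ->
  (alg_isomorphic A1 A2 <->
   exists C : 'M[R[i]]_(n + n), C \in unitmx /\ M1 = C *m M2 *m C^T).
Proof.
move=> T1 T2 mm1 mm2 s1 s2 p1 p2.
have H1 := taut_hyp hn T1 mm1 s1 p1; have H2 := taut_hyp hn T2 mm2 s2 p2.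
split.
  apply: (iso_cong H1 H2) => x; exists (sqrtC x); by rewrite -expr2 sqrtCK.
by move=> [C [Cu eM]]; apply: (cong_iso H1 H2 Cu eM).
Qed.
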